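(* For every $n\geq 1$, the number of Grand-Dyck paths of semilength $n$ starting with an up step and avoiding the pattern $UDU$ equals the coefficient of $z^n$ in $\frac{1-3z-\sqrt{1-2z-3z^2}}{6z-2}$, i.e. the $n$-th term of OEIS sequence A005773 ($1,1,2,5,13,35,96,\dots$ indexed from $n=0$).
   Context: A Grand-Dyck path of semilength $n$ starting with an up step is a word with exactly $n$ letters $U$ and $n$ letters $D$ whose first letter is $U$. It avoids the pattern $UDU$ if it has no three consecutive letters equal to $U,D,U$. *)

(* Defs.v *)
From mathcomp Require Import all_boot all_order all_algebra.
Set Implicit Arguments. Unset Strict Implicit. Unset Printing Implicit Defensive.
Import GRing.Theory Num.Theory.
Local Open Scope ring_scope.

(* A word over {U,D} is encoded as a seq bool, with true = U and false = D. *)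

Definition avoids_UDU (w : seq bool) : bool := ~~ infix [:: true; false; true] w.

Definition gd_UDU_paths (n : nat) : {set (n.*2).-tuple bool} :=
  [set w : (n.*2).-tuple bool |
     [&& count id w == n, head false w & avoids_UDU w]].

Definition num_gd_UDU (n : nat) : nat := #|gd_UDU_paths n|.

(* Formal power series over rat are represented by their coefficient sequence
   nat -> rat.  [sqrt_series s] says s is the power series sqrt(1-2z-3z^2),
   i.e. s(0) = 1 and s^2 = 1 - 2z - 3z^2 (Cauchy product). *)
Definition sqrt_series (s : nat -> rat) : Prop :=
  s 0%N = 1 /\
  forall n : nat, \sum_(i < n.+1) s i * s (n - i)%N =
    (if n == 0%N then 1 else if n == 1%N then -2 else if n == 2%N then -3 else 0).

(* [gf_series s a]: a is the power series (1 - 3z - s(z)) / (6z - 2),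
   i.e. (6z - 2) a(z) = 1 - 3z - s(z), compared coefficientwise. *)
Definition gf_series (s a : nat -> rat) : Prop :=
  forall n : nat,
    (if n == 0%N then 0 else 6 * a n.-1) - 2 * a n =
    (if n == 0%N then 1 else if n == 1%N then -3 else 0) - s n.

(* Main.v *)
Require Import Defs.
From mathcomp Require Import all_boot all_order all_algebra.
From mathcomp Require Import zify ring lra.
Set Implicit Arguments. Unset Strict Implicit. Unset Printing Implicit Defensive.

Fixpoint allseq (m : nat) : seq (seq bool) :=
  if m is m'.+1 then [seq true :: s | s <- allseq m'] ++ [seq false :: s | s <- allseq m']
  else [:: [::]].

Lemma mem_allseq m s : (s \in allseq m) = (size s == m).
Proof.
elim: m s => [|m IH] s; first by case: s.
apply/idP/idP.
- by rewrite mem_cat => /orP [] /mapP [t Ht ->]; rewrite /= ?eqSS -IH.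
- case: s => [|x s] //= Hs; rewrite mem_cat; case: x; apply/orP; [left|right];
  by apply: map_f; rewrite IH.
Qed.

Lemma uniq_allseq m : uniq (allseq m).
Proof.
elim: m => [|m IH] //=.
rewrite cat_uniq !map_inj_uniq ?IH //=; try by move=> a b [].
rewrite andbT; apply/hasPn => t /mapP [u _ ->]; apply/mapP => -[v _]; discriminate.
Qed.

Lemma card_count m (P : seq bool -> bool) :
  #|[set w : m.-tuple bool | P w]| = count P (allseq m).
Proof.
rewrite cardE /enum_mem size_filter -enumT.
rewrite (eq_count (a2 := fun w : m.-tuple bool => P w)); last by move=> w; rewrite /= inE.
rewrite -(count_map val P).
suff H : perm_eq [seq val i | i <- enum {: m.-tuple bool}] (allseq m) by rewrite (permP H).
apply: uniq_perm.
- by rewrite map_inj_uniq ?enum_uniq //; apply: val_inj.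
- exact: uniq_allseq.
move=> s; rewrite mem_allseq; apply/mapP/idP.
- by move=> [t _ ->]; rewrite size_tuple.
- move=> Hs; exists (Tuple Hs) => //; by rewrite mem_enum.
Qed.

Inductive st := SU | SD1 | SD2.

Fixpoint ok (c : st) (w : seq bool) : bool :=
  match w with
  | [::] => true
  | x :: w' =>
    match c, x with
    | SU, true => ok SU w'
    | SU, false => ok SD1 w'
    | SD1, true => false
    | SD1, false => ok SD2 w'
    | SD2, true => ok SU w'
    | SD2, false => ok SD2 w'
    end
  end.

Fixpoint vl (c : st) (w : seq bool) : nat :=
  match w with
  | [::] => 0
  | x :: w' =>
    match c, x with
    | SU, true => vl SU w'
    | SU, false => vl SD1 w'
    | SD1, true => 0
    | SD1, false => vl SD2 w'
    | SD2, true => (vl SU w').+1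
    | SD2, false => vl SD2 w'
    end
  end.

Lemma vl_size c w : vl c w <= size w.
Proof. elim: w c => [|x w IH] [] //=; case: x => //=; rewrite ?ltnS //; exact: leqW. Qed.

Definition pat := [:: true; false; true].

Lemma ok_avoid w :
  [/\ ok SU w = ~~ infix pat (true :: w),
      ok SD1 w = ~~ infix pat (true :: false :: w) &
      ok SD2 w = ~~ infix pat w].
Proof.
elim: w => [|x w [IH1 IH2 IH3]] //=.
case: x => /=; rewrite ?IH1 ?IH2 ?IH3 //=.
by case: w {IH1 IH2 IH3}.
Qed.

Definition Pr c p j (w : seq bool) := [&& count id w == p, ok c w & vl c w == j].

Definition gU p q j := 'C(p, j) * 'C(q - j, j).
Definition gD1 p q j :=
  if j is j'.+1 then (if p is p'.+1 then 'C(p', j') * 'C(q.+1 - j, j) else 0)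
  else (p == 0 : nat).
Definition gD2 p q j :=
  if j is j'.+1 then (if p is p'.+1 then 'C(p', j') * 'C(q.+2 - j, j) else 0)
  else (p == 0 : nat).
Definition g c := match c with SU => gU | SD1 => gD1 | SD2 => gD2 end.

Lemma count_allseqS m (P : pred (seq bool)) :
  count P (allseq m.+1) = count (fun w => P (true :: w)) (allseq m)
                        + count (fun w => P (false :: w)) (allseq m).
Proof. by rewrite /= count_cat !count_map. Qed.

Lemma count_big m p (P : pred (seq bool)) :
  (forall w, P w -> count id w = p) -> m < p -> count P (allseq m) = 0.
Proof.
move=> HP Hp; apply/eqP; rewrite -leqn0 leqNgt -has_count; apply/hasPn => w.
rewrite mem_allseq => /eqP Hs; apply/negP => /HP Hc.
by move: Hp; rewrite -Hc -Hs ltnNge count_size.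
Qed.

Lemma gU_rec p q j : 0 < p + q ->
  gU p q j = (if p is p'.+1 then gU p' q j else 0) + (if q is q'.+1 then gD1 p q' j else 0).
Proof.
rewrite /gU; case: p => [|p]; case: q => [|q] //= _.
- by case: j.
- by case: j => [|j]; rewrite !addn0 ?bin0 /= ?sub0n ?bin0n ?muln0.
- case: j => [|j] //=; first by rewrite !bin0.
  by rewrite binS mulnDl.
Qed.
Lemma gD1_rec p q j : 0 < p + q ->
  gD1 p q j = (if q is q'.+1 then gD2 p q' j else 0).
Proof.
rewrite /gD1 /gD2; case: q => [|q] //; case: p => [|p] //= _.
by case: j => [|j] //=; rewrite subSS sub0n bin0n muln0.
Qed.
Lemma gD2_rec p q j : 0 < p + q ->
  gD2 p q j = (if p is p'.+1 then (if j is j'.+1 then gU p' q j' else 0) else 0)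
     + (if q is q'.+1 then gD2 p q' j else 0).
Proof.
rewrite /gD2 /gU; case: p => [|p]; case: q => [|q] //= _.
- case: j => [|j] //=; rewrite addn0; case: j => [|j] //=.
- case: j => [|j] //=.
  rewrite !subSS; case: (leqP j q.+1) => H.
    by rewrite (subSn H) binS mulnDr addnC.
  have -> : q.+2 - j = 0 by lia.
  have -> : q.+1 - j = 0 by lia.
  by rewrite !bin0n; case: j H => [|j] //=; rewrite !muln0.
Qed.

Lemma Nclosed m : forall c p q j, p + q = m -> count (Pr c p j) (allseq m) = g c p q j.
Proof.
elim: m => [|m IH] c p q j Hm.
  have [-> ->] : p = 0 /\ q = 0 by lia.
  by case: c; case: j.
rewrite count_allseqS.
have HT : count (fun w => Pr c p j (true :: w)) (allseq m) =
   if p is p'.+1 then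
     (match c with SU => gU p' q j | SD1 => 0
        | SD2 => if j is j'.+1 then gU p' q j' else 0 end) else 0.
  case: p Hm => [|p] Hm.
    by apply/eqP; rewrite -leqn0 leqNgt -has_count; apply/hasPn => w _; rewrite /Pr /=.
  have Hm' : p + q = m by lia.
  case: c.
  - move: (IH SU p q j Hm') => /= <-; apply: eq_count => w; by rewrite /Pr /= add1n eqSS.
  - by apply/eqP; rewrite -leqn0 leqNgt -has_count; apply/hasPn => w _; rewrite /Pr /= !andbF.
  - case: j => [|j].
      by apply/eqP; rewrite -leqn0 leqNgt -has_count; apply/hasPn => w _; rewrite /Pr /= !andbF.
    move: (IH SU p q j Hm') => /= <-; apply: eq_count => w; by rewrite /Pr /= add1n eqSS.
have HF : count (fun w => Pr c p j (false :: w)) (allseq m) =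
   if q is q'.+1 then
     (match c with SU => gD1 p q' j | SD1 => gD2 p q' j | SD2 => gD2 p q' j end) else 0.
  case: q Hm HT => [|q] Hm HT.
    apply: (@count_big m p); last by lia.
    by move=> w /andP [/eqP <-].
  have Hm' : p + q = m by lia.
  clear HT; case: c.
  - move: (IH SD1 p q j Hm') => /= <-; apply: eq_count => w; by rewrite /Pr /= add0n.
  - move: (IH SD2 p q j Hm') => /= <-; apply: eq_count => w; by rewrite /Pr /= add0n.
  - move: (IH SD2 p q j Hm') => /= <-; apply: eq_count => w; by rewrite /Pr /= add0n.
rewrite HT HF; have Hpq : 0 < p + q by lia.
clear HT HF; case: c => /=.
- by rewrite gU_rec.
- by rewrite gD1_rec //; case: p {Hm Hpq}.
- by rewrite gD2_rec.
Qed.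

Lemma count_split (P : pred (seq bool)) (v : seq bool -> nat) K l :
  (forall w, w \in l -> v w < K) ->
  count P l = \sum_(j < K) count (fun w => P w && (v w == j)) l.
Proof.
elim: l => [|x l IH] H; first by rewrite big1.
rewrite /= big_split /= -IH; last by move=> w Hw; apply: H; rewrite inE Hw orbT.
congr (_ + _).
case: (P x) => /=; last by rewrite big1.
have Hx := H x (mem_head x l).
rewrite (bigD1 (Ordinal Hx)) //= eqxx big1 // => j Hj.
case: eqP => // Hv; move: Hj; by rewrite -val_eqE /= Hv eqxx.
Qed.

Lemma num_closed k :
  num_gd_UDU k.+1 = \sum_(j < (k + k.+1).+1) 'C(k, j) * 'C(k.+1 - j, j).
Proof.
rewrite /num_gd_UDU /gd_UDU_paths (@card_count _ (fun w => [&& count id w == k.+1, head false w & avoids_UDU w])).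
have -> : (k.+1).*2 = (k + k.+1).+1 by rewrite -addnn addSn addnS.
rewrite count_allseqS.
rewrite [X in _ + X](eq_count (a2 := pred0)) ?count_pred0 ?addn0; last by move=> w; rewrite /= andbF.
rewrite (eq_count (a2 := fun w => (count id w == k) && ok SU w)); last first.
  move=> w; rewrite /= /avoids_UDU; have [-> _ _] := ok_avoid w.
  by rewrite add1n eqSS.
rewrite (count_split _ (v := vl SU) (K := (k + k.+1).+1)); last first.
  by move=> w; rewrite mem_allseq => /eqP <-; rewrite ltnS vl_size.
apply: eq_bigr => j _.
rewrite -[RHS](@Nclosed (k + k.+1) SU k k.+1 j) //.
by apply: eq_count => w; rewrite /Pr andbA.
Qed.

Import Order.TTheory GRing.Theory Num.Theory.
Local Open Scope ring_scope.

Definition Fb (n j : nat) : rat := ('C(n.-1, j) * 'C(n - j, j))%:R.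
Definition Hb (n j : nat) : rat := (2 * n%:R - 2 * j%:R + 1) * ('C(n, j) * 'C(n - j, j))%:R.
Definition Gb (n j : nat) : rat := if j is i.+1 then -2 * Hb n i else 0.

Lemma solve_eq (a b c : rat) : a != 0 -> a * b = c -> b = c / a.
Proof. by move=> Ha <-; rewrite mulrAC mulfV // mul1r. Qed.

Lemma natr_neq0 (k : nat) : (k.+1%:R : rat) != 0.
Proof. by rewrite pnatr_eq0. Qed.

Lemma key n j :
  n.+2%:R * Fb n.+2 j - 2 * n.+2%:R * Fb n.+1 j - 3 * n%:R * Fb n j = Gb n j.+1 - Gb n j.
Proof.
rewrite /Fb /Gb /Hb /=.
case: j => [|i].
  rewrite !bin0 /=; ring.
set j := i.+1.
have [Hn|Hn] := leqP (i.*2.+2) n.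
-
  have [m Em] : exists m, n = (i.+1 + (i.+1 + m))%N by exists (n - i.*2.+2)%N; lia.
  set r := (i.+1 + m)%N.
  have e1 : (n.+2 - i.+1 = r.+2)%N by lia.
  have e2 : (n.+1 - i.+1 = r.+1)%N by lia.
  have e3 : (n - i.+1 = r)%N by lia.
  have e4 : (n - i = r.+1)%N by lia.
  rewrite e1 e2 e3 e4.
  have h1 := mul_bin_down n.+1 i.+1; rewrite /= e2 in h1.
  have h2 := mul_bin_down r.+1 i.+1; rewrite /= (_ : r.+1 - i.+1 = m.+1)%N in h2; last by lia.
  have h3 := mul_bin_down r.+2 i.+1; rewrite /= (_ : r.+2 - i.+1 = m.+2)%N in h3; last by lia.
  have h4 := mul_bin_down n i.+1; rewrite e3 in h4.
  have h5 := mul_bin_left n i; rewrite e4 in h5.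
  have h6 := mul_bin_left r.+1 i; rewrite (_ : r.+1 - i = m.+2)%N in h6; last by lia.
  move/(congr1 (fun x => x%:R : rat)): h1; rewrite !natrM => /esym /solve_eq -/(_ (natr_neq0 _)) h1.
  move/(congr1 (fun x => x%:R : rat)): h2; rewrite !natrM => /esym /solve_eq -/(_ (natr_neq0 _)) h2.
  move/(congr1 (fun x => x%:R : rat)): h3; rewrite !natrM => /esym /solve_eq -/(_ (natr_neq0 _)) h3.
  move/(congr1 (fun x => x%:R : rat)): h5; rewrite !natrM => /esym /solve_eq -/(_ (natr_neq0 _)) h5.
  move/(congr1 (fun x => x%:R : rat)): h6; rewrite !natrM => /esym /solve_eq -/(_ (natr_neq0 _)) h6.
  move/(congr1 (fun x => x%:R : rat)): h4; rewrite !natrM => h4.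
  idtac.
  have -> : 3 * n%:R * ('C(n.-1, i.+1)%:R * 'C(r, i.+1)%:R) = 3 * (r%:R * 'C(n, i.+1)%:R) * 'C(r, i.+1)%:R :> rat
    by rewrite -h4; ring.
  rewrite h1 h3 h2 h5 h6 h2.
  rewrite /j /r; set P := ('C(n, i.+1)%:R : rat); set Q := ('C(r, i.+1)%:R : rat); rewrite Em.
  clearbody P Q.
  have hi : 0 <= i%:R :> rat by apply: ler0n.
  have hm : 0 <= m%:R :> rat by apply: ler0n.
  rewrite -!natr1 !natrD.
  field.
  by apply/and3P; split; rewrite gt_eqF //; lra.
have [En|Hn2] := eqVneq n (i.*2.+1).
-
  rewrite /j En.
  rewrite (_ : (i.*2.+3 - i.+1 = i.+2)%N); last by lia.
  rewrite (_ : (i.*2.+2 - i.+1 = i.+1)%N); last by lia.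
  rewrite (_ : (i.*2.+1 - i.+1 = i)%N); last by lia.
  rewrite (_ : (i.*2.+1 - i = i.+1)%N); last by lia.
  have Hc : 'C(i.*2.+1, i.+1) = 'C(i.*2.+1, i).
    by rewrite -bin_sub; [congr binomial; lia | lia].
  rewrite (bin_small (ltnSn i)) binS Hc !binSn binn !muln0 !natrM !natrD.
  rewrite -!natr1 -mul2n natrM. ring.
have [En2|Hn3] := eqVneq n (i.*2).
- rewrite /j En2.
  rewrite (_ : (i.*2.+2 - i.+1 = i.+1)%N); last by lia.
  rewrite (_ : (i.*2.+1 - i.+1 = i)%N); last by lia.
  rewrite (_ : (i.*2 - i = i)%N); last by lia.
  rewrite (@bin_small (i.*2 - i.+1) i.+1); last by lia.
  rewrite (bin_small (ltnSn i)) !binn !muln0 !muln1.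
  have h := mul_bin_diag i.*2.+1 i.
  move/(congr1 (fun x => x%:R : rat)): h; rewrite !natrM => /esym /solve_eq -/(_ (natr_neq0 _)) h.
  rewrite h -!natr1 -mul2n natrM.
  field.
  have hi : 0 <= i%:R :> rat by apply: ler0n.
  rewrite gt_eqF //; lra.
have Hlt : (n < i.*2)%N by lia.
rewrite /j (@bin_small (n.+2 - i.+1) i.+1); last by lia.
rewrite (@bin_small (n.+1 - i.+1) i.+1); last by lia.
rewrite (@bin_small (n - i.+1) i.+1); last by lia.
rewrite (@bin_small (n - i) i); last by lia.
rewrite !muln0; ring.
Qed.

Definition bb n : rat := \sum_(j < n.+1) Fb n j.

Lemma sum_widen (F : nat -> rat) a b : (a <= b)%N -> (forall j, (a <= j)%N -> F j = 0) ->
  \sum_(j < b) F j = \sum_(j < a) F j.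
Proof.
move=> Hab H0; rewrite [RHS](big_ord_widen b F Hab) [RHS]big_mkcond /=.
apply: eq_bigr => j _; case: ifP => // /negbT; rewrite -leqNgt => /H0 //.
Qed.

Lemma tele (G : nat -> rat) K : \sum_(j < K) (G j.+1 - G j) = G K - G 0%N.
Proof.
elim: K => [|K IH]; first by rewrite big_ord0 subrr.
by rewrite big_ord_recr /= IH; ring.
Qed.

Lemma bb_rec n : n.+2%:R * bb n.+2 = 2 * n.+2%:R * bb n.+1 + 3 * n%:R * bb n.
Proof.
have H : \sum_(j < n.+3) (n.+2%:R * Fb n.+2 j - 2 * n.+2%:R * Fb n.+1 j - 3 * n%:R * Fb n j) = 0.
  rewrite (eq_bigr (fun j : 'I_n.+3 => Gb n j.+1 - Gb n j)); last by move=> j _; rewrite key.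
  rewrite (tele (Gb n)) /Gb /Hb (@bin_small n n.+2) // mul0n mulr0 mulr0; ring.
rewrite !sumrB -!mulr_sumr in H.
rewrite /bb (@sum_widen (Fb n.+1) n.+2 n.+3) // in H; last first.
  by move=> j Hj; rewrite /Fb /= bin_small ?mul0n //; lia.
rewrite (@sum_widen (Fb n) n.+1 n.+3) in H; first last.
- by move=> j Hj; rewrite /Fb bin_small ?mul0n //; case: n Hj => //= n Hj; lia.
- lia.
set a := _ * \sum_(j < n.+3) _ in H *.
set b := _ * \sum_(j < n.+2) _ in H *.
set c := _ * \sum_(j < n.+1) _ in H *.
have E : a = (a - b - c) + (b + c) by ring.
by rewrite E H add0r.
Qed.

Definition eqK (K : nat) (p r : {poly rat}) := forall i, (i < K)%N -> p`_i = r`_i.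

Lemma eqK_refl K p : eqK K p p. Proof. by []. Qed.
Lemma eqK_sym K p r : eqK K p r -> eqK K r p. Proof. by move=> H i Hi; rewrite H. Qed.
Lemma eqK_trans K p r t : eqK K p r -> eqK K r t -> eqK K p t.
Proof. by move=> H1 H2 i Hi; rewrite H1 ?H2. Qed.
Lemma eqK_le K K' p r : (K' <= K)%N -> eqK K p r -> eqK K' p r.
Proof. by move=> HK H i Hi; apply: H; lia. Qed.
Lemma eqK_eq K p r : p = r -> eqK K p r. Proof. by move->. Qed.

Lemma eqK_mul K p p' r r' : eqK K p p' -> eqK K r r' -> eqK K (p * r) (p' * r').
Proof.
move=> H1 H2 i Hi; rewrite !coefM; apply: eq_bigr => j _.
have Hj := ltn_ord j.
by rewrite H1 ?H2 //; lia.
Qed.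

Lemma eqK_deriv K p r : eqK K.+1 p r -> eqK K p^`() r^`().
Proof. by move=> H i Hi; rewrite !coef_deriv H. Qed.

Lemma eqK_cancel K E : eqK K ((1 - 'X *+ 3) * E) 0 -> eqK K E 0.
Proof.
move=> H; elim=> [|i IH] Hi.
  by have := H 0%N Hi; rewrite mulrBl mul1r mulrnAl coefB coefMn coefXM /= coef0 subr0.
have := H i.+1 Hi; rewrite mulrBl mul1r mulrnAl coefB coefMn coefXM /= IH; last by lia.
by rewrite coef0 mul0rn subr0.
Qed.

Definition qq : {poly rat} := 1 - 'X *+ 2 - ('X * 'X) *+ 3.

Section Alg.
Variables (s a : nat -> rat).
Hypothesis Hs : sqrt_series s.
Hypothesis Hg : gf_series s a.

Definition VV i : rat := (i == 0%N)%:R + 2 * a i.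

Lemma S1 K : eqK K (\poly_(i < K) s i * \poly_(i < K) s i) qq.
Proof.
move=> i Hi; rewrite coefM.
rewrite (eq_bigr (fun j : 'I_i.+1 => s j * s (i - j)%N)); last first.
  move=> j _; have Hj := ltn_ord j; rewrite !coef_poly.
  have -> : (j < K)%N by lia.
  have -> : (i - j < K)%N by lia.
  done.
rewrite (proj2 Hs) /qq !coefB !coefMn coef1 coefXM !coefX.
case: i {Hi} => [|[|[|i]]].
- by rewrite eqxx mulr0n !subr0.
- by rewrite /= mulr0n subr0 sub0r.
- by rewrite /= mulr0n subr0 sub0r.
- by rewrite /= !mulr0n !subr0.
Qed.

Lemma S2 K : eqK K (\poly_(i < K) s i) ((1 - 'X *+ 3) * \poly_(i < K) VV i).
Proof.
move=> i Hi; rewrite mulrBl mul1r mulrnAl coefB coefMn coefXM !coef_poly Hi /VV.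
have := Hg i.
case: i Hi => [|[|i]] Hi /= H.
- lra.
- rewrite (_ : (0 < K)%N); last by lia.
  rewrite -mulr_natr; lra.
- rewrite (_ : (i.+1 < K)%N); last by lia.
  rewrite -mulr_natr; lra.
Qed.

Lemma coefP_lt (E : nat -> rat) K i : (i < K)%N -> (\poly_(j < K) E j)`_i = E i.
Proof. by move=> H; rewrite coef_poly H. Qed.

Lemma eqK_mulrn K p r n : eqK K p r -> eqK K (p *+ n) (r *+ n).
Proof. by move=> H i Hi; rewrite !coefMn H. Qed.

Lemma eqK_sub0 K p r : eqK K p r -> eqK K (p - r) 0.
Proof. by move=> H i Hi; rewrite coefB H // subrr coef0. Qed.

Lemma deriv1r : (1 : {poly rat})^`() = 0.
Proof. by rewrite -polyC1 derivC. Qed.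

Lemma Erel L : eqK L (qq * (\poly_(i < L.+1) VV i)^`() - (\poly_(i < L.+1) VV i) *+ 2) 0.
Proof.
set PS := \poly_(i < L.+1) s i.
set PV := \poly_(i < L.+1) VV i.
set W := (1 - 'X *+ 3) * PV.
have h1 : eqK L.+1 (PS * PS) qq by apply: S1.
have h2 : eqK L.+1 PS W by apply: S2.
have d1 : eqK L (PS^`() * PS + PS * PS^`()) qq^`() by rewrite -derivM; apply: eqK_deriv.
have d2 : eqK L PS^`() W^`() by apply: eqK_deriv.
have e1 : eqK L (qq * (PS^`() *+ 2)) (PS * qq^`()).
  apply: (@eqK_trans _ _ (PS * PS * (PS^`() *+ 2))).
    apply: eqK_mul; [apply: eqK_sym; apply: eqK_le h1 | apply: eqK_refl]; lia.
  apply: (@eqK_trans _ _ (PS * (PS^`() * PS + PS * PS^`()))).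
    by apply: eqK_eq; ring.
  by apply: eqK_mul; [apply: eqK_refl | exact: d1].
have e2 : eqK L (qq * (W^`() *+ 2)) (W * qq^`()).
  apply: (@eqK_trans _ _ (qq * (PS^`() *+ 2))).
    by apply: eqK_mul; [apply: eqK_refl | apply: eqK_mulrn; apply: eqK_sym].
  apply: (eqK_trans e1).
  by apply: eqK_mul; [apply: eqK_le h2 | apply: eqK_refl].
have e3 : eqK L (((1 - 'X *+ 3) * (qq * PV^`() - PV *+ 2)) *+ 2) 0.
  have -> : ((1 - 'X *+ 3) * (qq * PV^`() - PV *+ 2)) *+ 2 = qq * (W^`() *+ 2) - W * qq^`().
    rewrite /W /qq !(derivB, derivMn, derivM, derivX, deriv1r).
    ring.
  exact: (eqK_sub0 e2).
apply: eqK_cancel => i Hi.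
have := e3 i Hi; rewrite coefMn coef0 => /eqP; rewrite mulrn_eq0 /= => /eqP.
by [].
Qed.

Lemma a_rec k : k.+2%:R * a k.+2 = 2 * k.+2%:R * a k.+1 + 3 * k%:R * a k.
Proof.
have H := @Erel k.+2 k.+1 (ltnSn _).
rewrite /qq !mulrBl mul1r !mulrnAl -[('X * 'X) * _]mulrA !coefB !coefMn !coefXM in H.
rewrite !coef_deriv coef0 in H.
rewrite !coefP_lt in H; try lia.
rewrite /VV /= in H.
case: k H => [|k] H; rewrite /= in H;
apply/eqP; rewrite -subr_eq0; apply/eqP;
set G := (X in X = 0);
set T := (X in X = 0) in H;
(have E : G * 2 = T by rewrite /G /T; ring);
move: E; rewrite H => /eqP; rewrite mulf_eq0 => /orP [/eqP //|];
by rewrite pnatr_eq0.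
Qed.

Lemma a0 : a 0%N = 0.
Proof. have := Hg 0%N; rewrite /= (proj1 Hs); lra. Qed.

Lemma a1 : a 1%N = 1.
Proof.
have := Hg 1%N; have := (proj2 Hs) 1%N.
rewrite !big_ord_recl big_ord0 /= (proj1 Hs) a0 /bump /=.
lra.
Qed.

End Alg.

Lemma num_bb k : (num_gd_UDU k.+1)%:R = bb k.+1.
Proof.
rewrite num_closed natr_sum /bb.
rewrite (@sum_widen (fun j => ('C(k, j) * 'C(k.+1 - j, j))%:R) k.+2); last first.
- by move=> j Hj; rewrite (@bin_small k j); [rewrite mul0n | lia].
- lia.
by apply: eq_bigr.
Qed.

Lemma bb1 : bb 1 = 1.
Proof. by rewrite /bb !big_ord_recl big_ord0 /Fb /= addr0. Qed.

Theorem corollary2 (s a : nat -> rat) :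
  sqrt_series s -> gf_series s a ->
  forall n : nat, (1 <= n)%N -> ((num_gd_UDU n)%:R = a n)%R.
Proof.
move=> Hs Hg.
have P : forall k, bb k.+1 = a k.+1 /\ bb k.+2 = a k.+2.
  elim=> [|k [IH1 IH2]].
    have e1 : bb 1 = a 1 by rewrite bb1 (a1 Hs Hg).
    split => //.
    have h1 := bb_rec 0; have h2 := a_rec Hs Hg 0.
    rewrite mulr0n mulr0 mul0r addr0 in h1.
    rewrite mulr0n mulr0 mul0r addr0 in h2.
    apply: (mulfI (natr_neq0 1)); by rewrite h1 h2 e1.
  split => //.
  have h1 := bb_rec k.+1; have h2 := a_rec Hs Hg k.+1.
  apply: (mulfI (natr_neq0 k.+2)); by rewrite h1 h2 IH1 IH2.
case=> [|k] // _.
by rewrite num_bb (proj1 (P k)).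
Qed.
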